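(* Let $n\ge 3$ and let $C$ be a chain with vertices $1,\dots,n$ and positive weights $w_1,\dots,w_{n-1}$ (edge $\{i,i+1\}$ has weight $w_i$). Let $\lambda(C)=d^D(1,n)$, where $D$ is the real symmetric $n\times n$ matrix with $D_{i,i+1}=D_{i+1,i}=w_i^{-1}$ for $i=1,\dots,n-1$ and all other entries $0$. Let $f(b)=\sum_{i=1}^{n-1}w_ib_i$ for $b\in\mathbb{R}^{n-1}$ and define $$L_1(C)=\max\{f(b) : |b_i|^2+|b_{i+1}|^2\le 1\ \forall\,1\le i\le n-2\},\qquad L_2(C)=\max\Big\{f(b) : \sum_{i=1}^{n-1}|b_i|\le\frac n2\Big\},$$ $$R_1(C)=\max\{f(b) : |b_i|+|b_{i+1}|\le 1\ \forall\,1\le i\le n-2\},\qquad R_2(C)=\max\Big\{f(b) : |b_i|\le\frac{1}{2\cos\frac{\pi}{n+1}}\ \forall\,1\le i\le n-1\Big\}.$$ Then $$\max(R_1(C),R_2(C))\le\lambda(C)\le\min(L_1(C),L_2(C)),$$ and moreover $R_2(C)=\dfrac{\ell(C)}{2\cos\frac{\pi}{n+1}}$ and $L_2(C)=\dfrac n2\max_{1\le i\le n-1}w_i$, where $\ell(C)=\sum_{i=1}^{n-1}w_i$.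
   Context: For a self-adjoint $n\times n$ matrix $M$, $d^M(i,j)=\sup\{|a(i)-a(j)| : a\in\mathbb{C}^n,\ \|[M,\pi(a)]\|\le 1\}$, where $\pi(a)=\mathrm{diag}(a(1),\dots,a(n))$ and $\|\cdot\|$ is the operator norm. $\lambda(C)$ is called the noncommutative length of $C$ and $\ell(C)$ its geodesic length. *)

(* Defs.v *)
From HB Require Import structures.
From mathcomp Require Import all_boot all_order all_algebra.
From mathcomp Require Import all_classical all_reals all_analysis.
From mathcomp Require Import complex.
Set Implicit Arguments. Unset Strict Implicit. Unset Printing Implicit Defensive.
Import Order.TTheory GRing.Theory Num.Theory.
Local Open Scope ring_scope.
Local Open Scope classical_set_scope.

Section Defs.
Variable R : realType.

Definition cmod (z : R[i]) : R := Num.sqrt (complex.Re z ^+ 2 + complex.Im z ^+ 2).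

Definition vnorm (n : nat) (v : 'cV[R[i]]_n) : R :=
  Num.sqrt (\sum_(k < n) cmod (v k 0) ^+ 2).

Definition opnorm (n : nat) (A : 'M[R[i]]_n) : R :=
  sup [set vnorm (A *m v) | v in [set v : 'cV[R[i]]_n | vnorm v <= 1]].

Definition piDiag (n : nat) (a : 'I_n -> R[i]) : 'M[R[i]]_n :=
  diag_mx (\row_k a k).

Definition commutator (n : nat) (M X : 'M[R[i]]_n) : 'M[R[i]]_n :=
  M *m X - X *m M.

(* d^M(i,j) = sup { |a(i) - a(j)| : a in C^n, ||[M, pi(a)]|| <= 1 },
   an extended real (the supremum may a priori be +oo) *)
Definition dist_mx (n : nat) (M : 'M[R[i]]_n) (i j : 'I_n) : \bar R :=
  ereal_sup [set (cmod (a i - a j))%:E |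
             a in [set a : 'I_n -> R[i] | opnorm (commutator M (piDiag a)) <= 1]].

(* Chain with vertices 0..n-1 (paper: 1..n); edge {k,k+1} has weight w k
   (paper: w_{k+1}), for k < n-1. *)
Definition chainD (n : nat) (w : nat -> R) : 'M[R]_n :=
  \matrix_(i < n, j < n)
    if j == i.+1 :> nat then (w i)^-1
    else if i == j.+1 :> nat then (w j)^-1 else 0.

Definition cplx_mx (n : nat) (M : 'M[R]_n) : 'M[R[i]]_n :=
  map_mx (fun x => x%:C%C) M.

Definition nclength (n : nat) (w : nat -> R) : \bar R :=
  match n with
  | 0 => 0%E
  | m.+1 => dist_mx (cplx_mx (chainD m.+1 w)) ord0 ord_max
  end.

Definition fobj (n : nat) (w : nat -> R) (b : 'I_n.-1 -> R) : R :=
  \sum_(k < n.-1) w k * b k.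

(* max of f over a constraint set (the sets are compact; max = sup) *)
Definition maxf (n : nat) (w : nat -> R) (P : ('I_n.-1 -> R) -> Prop) : R :=
  sup [set fobj w b | b in P].

Definition L1 (n : nat) (w : nat -> R) : R :=
  maxf w (fun b => forall k l : 'I_n.-1, val l = (val k).+1 ->
                     `|b k| ^+ 2 + `|b l| ^+ 2 <= 1).
Definition L2 (n : nat) (w : nat -> R) : R :=
  maxf w (fun b => \sum_(k < n.-1) `|b k| <= n%:R / 2).
Definition R1 (n : nat) (w : nat -> R) : R :=
  maxf w (fun b => forall k l : 'I_n.-1, val l = (val k).+1 ->
                     `|b k| + `|b l| <= 1).
Definition R2 (n : nat) (w : nat -> R) : R :=
  maxf w (fun b => forall k : 'I_n.-1, `|b k| <= (2 * cos (pi / n.+1%:R))^-1).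

Definition geolength (n : nat) (w : nat -> R) : R := \sum_(k < n.-1) w k.

End Defs.

(* Main.v *)
Require Import Defs.
From HB Require Import structures.
From mathcomp Require Import all_boot all_order all_algebra.
From mathcomp Require Import all_classical all_reals all_analysis.
From mathcomp Require Import complex.
From mathcomp Require Import ring lra.
Import Order.TTheory GRing.Theory Num.Theory.
Set Implicit Arguments. Unset Strict Implicit. Unset Printing Implicit Defensive.
Local Open Scope ring_scope.

Section Cmod.
Variable R : realType.
Implicit Types x y z : R[i].

Lemma cmodE z : `|z| = (cmod z)%:C%C.
Proof. by rewrite normc_def. Qed.

Lemma cmodRe z : cmod z = complex.Re `|z|.
Proof. by rewrite normc_def. Qed.

Lemma cmod_ge0 z : 0 <= cmod z.
Proof. rewrite -lecR -cmodE; exact: normr_ge0. Qed.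

Lemma cmod_le x y : (cmod x <= cmod y) = (`|x| <= `|y|).
Proof. by rewrite !cmodE lecR. Qed.

Lemma cmod_eq x y : (cmod x = cmod y) <-> (`|x| = `|y|).
Proof. rewrite !cmodE; split; first by move->. by case. Qed.

Lemma C_inj (a b : R) : a%:C%C = b%:C%C -> a = b.
Proof. by case. Qed.

Lemma cmodM x y : cmod (x * y) = cmod x * cmod y.
Proof. by apply: C_inj; rewrite rmorphM /= -!cmodE normrM. Qed.

Lemma cmodD x y : cmod (x + y) <= cmod x + cmod y.
Proof. by rewrite -lecR rmorphD /= -!cmodE ler_normD. Qed.

Lemma cmodN x : cmod (- x) = cmod x.
Proof. by apply/cmod_eq; rewrite normrN. Qed.

Lemma cmodB x y : cmod (x - y) = cmod (y - x).
Proof. by apply/cmod_eq; rewrite distrC. Qed.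

Lemma cmodR (r : R) : cmod (r%:C%C) = `|r|.
Proof. by rewrite /cmod /= expr0n /= addr0 sqrtr_sqr. Qed.

Lemma cmod0 : cmod (0 : R[i]) = 0.
Proof. by rewrite (cmodR 0) normr0. Qed.

Lemma cmod1 : cmod (1 : R[i]) = 1.
Proof. by rewrite (cmodR 1) normr1. Qed.

Lemma cmodV x : cmod (x^-1) = (cmod x)^-1.
Proof. by apply: C_inj; rewrite fmorphV /= -!cmodE normfV. Qed.

Lemma cmod_sum (I : finType) (F : I -> R[i]) :
  cmod (\sum_i F i) <= \sum_i cmod (F i).
Proof.
elim/big_ind2: _ => //; first by rewrite cmod0.
move=> a b x y h1 h2; apply: le_trans (cmodD _ _) _; exact: lerD.
Qed.
End Cmod.

Section Vnorm.
Variable R : realType.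

Lemma vnorm_ge0 n (v : 'cV[R[i]]_n) : 0 <= vnorm v.
Proof. exact: sqrtr_ge0. Qed.

Lemma sum_sq_ge0 n (v : 'cV[R[i]]_n) : 0 <= \sum_k cmod (v k 0) ^+ 2.
Proof. by apply: sumr_ge0 => k _; exact: sqr_ge0. Qed.

Lemma vnorm_sq n (v : 'cV[R[i]]_n) : vnorm v ^+ 2 = \sum_k cmod (v k 0) ^+ 2.
Proof. by rewrite /vnorm sqr_sqrtr // sum_sq_ge0. Qed.

Lemma vnorm_le_sq n (u v : 'cV[R[i]]_n) :
  \sum_k cmod (u k 0) ^+ 2 <= \sum_k cmod (v k 0) ^+ 2 -> vnorm u <= vnorm v.
Proof. by move=> h; rewrite /vnorm ler_sqrt // sum_sq_ge0. Qed.

Lemma sq_le (a b : R) : 0 <= a -> a <= b -> a ^+ 2 <= b ^+ 2.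
Proof. by move=> a0 ab; rewrite !expr2; apply: ler_pM. Qed.

Lemma cmod_le_vnorm n (v : 'cV[R[i]]_n) k : cmod (v k 0) <= vnorm v.
Proof.
rewrite -(ger0_norm (cmod_ge0 (v k 0))) -sqrtr_sqr /vnorm ler_sqrt ?sum_sq_ge0 //.
rewrite (bigD1 k) //= lerDl; apply: sumr_ge0 => j _; exact: sqr_ge0.
Qed.

Lemma opnorm_ub n (A : 'M[R[i]]_n) v : vnorm v <= 1 -> vnorm (A *m v) <= opnorm A.
Proof.
move=> hv; apply: ub_le_sup; last by exists v.
exists (Num.sqrt (\sum_i (\sum_j cmod (A i j)) ^+ 2)).
move=> y [u hu <-]; rewrite /vnorm ler_sqrt; last first.
  by apply: sumr_ge0 => i _; exact: sqr_ge0.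
apply: ler_sum => i _; apply: sq_le; first exact: cmod_ge0.
rewrite mxE; apply: le_trans (cmod_sum _) _; apply: ler_sum => j _.
rewrite cmodM -[X in _ <= X]mulr1; apply: ler_wpM2l; first exact: cmod_ge0.
exact: le_trans (cmod_le_vnorm _ _) hu.
Qed.

Lemma opnorm_le1 n (A : 'M[R[i]]_n) :
  (forall v, vnorm v <= 1 -> vnorm (A *m v) <= 1) -> opnorm A <= 1.
Proof.
move=> h; apply: ge_sup.
  exists (vnorm (A *m 0)), 0 => //=.
  rewrite /vnorm big1 ?sqrtr0 // => k _; rewrite mxE cmod0 expr0n //.
by move=> y [u hu <-]; exact: h.
Qed.
End Vnorm.
From mathcomp Require Import ring lra.
Section Schur.
Variable R : realType.

Lemma amgm (q p a b : R) : 0 < a -> 0 < b ->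
  q * p <= (q ^+ 2 * (b / a) + p ^+ 2 * (a / b)) / 2.
Proof.
move=> a0 b0.
have e : (q ^+ 2 * (b / a) + p ^+ 2 * (a / b)) / 2 - q * p = (q * b - p * a) ^+ 2 / (2 * (a * b)).
  by field; rewrite ?lt0r_neq0 ?mulr_gt0.
rewrite -subr_ge0 e; apply: divr_ge0; first exact: sqr_ge0.
by apply: mulr_ge0 => //; apply: mulr_ge0; exact: ltW.
Qed.

Lemma schur n (A : 'M[R[i]]_n) (B : 'I_n -> 'I_n -> R) (u : 'I_n -> R) :
  (forall i, 0 < u i) -> (forall i j, cmod (A i j) <= B i j) ->
  (forall i, \sum_j B i j * u j <= u i) -> (forall j, \sum_i B i j * u i <= u j) ->
  forall v, vnorm (A *m v) <= vnorm v.
Proof.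
move=> u0 hA hr hc v; apply: vnorm_le_sq.
set q := fun i => cmod ((A *m v) i 0); set p := fun j => cmod (v j 0).
rewrite -/(\sum_k q k ^+ 2) -/(\sum_k p k ^+ 2).
have B0 i j : 0 <= B i j by apply: le_trans (hA i j); exact: cmod_ge0.
have q0 i : 0 <= q i by exact: cmod_ge0.
have p0 i : 0 <= p i by exact: cmod_ge0.
have hq i : q i <= \sum_j B i j * p j.
  rewrite /q mxE; apply: le_trans (cmod_sum _) _; apply: ler_sum => j _.
  by rewrite cmodM; exact: (ler_wpM2r (p0 j) (hA i j)).
have S1 : \sum_i \sum_j B i j * (q i ^+ 2 * (u j / u i)) <= \sum_i q i ^+ 2.
  apply: ler_sum => i _.
  have -> : \sum_j B i j * (q i ^+ 2 * (u j / u i)) = q i ^+ 2 / u i * \sum_j B i j * u j.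
    rewrite mulr_sumr; apply: eq_bigr => j _; rewrite mulrA mulrC; ring.
  apply: le_trans (ler_wpM2l _ (hr i)) _.
    by apply: divr_ge0; [exact: sqr_ge0 | exact: ltW].
  by rewrite divfK // lt0r_neq0.
have S2 : \sum_i \sum_j B i j * (p j ^+ 2 * (u i / u j)) <= \sum_j p j ^+ 2.
  rewrite exchange_big; apply: ler_sum => j _.
  have -> : \sum_i B i j * (p j ^+ 2 * (u i / u j)) = p j ^+ 2 / u j * \sum_i B i j * u i.
    rewrite mulr_sumr; apply: eq_bigr => i _; ring.
  apply: le_trans (ler_wpM2l _ (hc j)) _.
    by apply: divr_ge0; [exact: sqr_ge0 | exact: ltW].
  by rewrite divfK // lt0r_neq0.
have key : \sum_i q i ^+ 2 <= (\sum_i q i ^+ 2 + \sum_j p j ^+ 2) / 2.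
  apply: le_trans (_ : \sum_i \sum_j B i j * ((q i ^+ 2 * (u j / u i) + p j ^+ 2 * (u i / u j)) / 2) <= _).
    apply: ler_sum => i _; rewrite expr2; apply: le_trans (ler_wpM2l (q0 i) (hq i)) _.
    rewrite mulr_sumr; apply: ler_sum => j _; rewrite mulrCA; apply: ler_wpM2l => //.
    exact: amgm.
  have -> : \sum_i \sum_j B i j * ((q i ^+ 2 * (u j / u i) + p j ^+ 2 * (u i / u j)) / 2)
     = (\sum_i \sum_j B i j * (q i ^+ 2 * (u j / u i)) + \sum_i \sum_j B i j * (p j ^+ 2 * (u i / u j))) / 2.
    rewrite -big_split /= mulr_suml; apply: eq_bigr => i _.
    rewrite -big_split /= mulr_suml; apply: eq_bigr => j _; ring.
  by rewrite ler_pM2r //; exact: lerD.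
lra.
Qed.
End Schur.

Section Sums.
Variable V : zmodType.

Lemma tele (f : nat -> V) N : \sum_(k < N) (f k.+1 - f k) = f N - f 0%N.
Proof.
elim: N => [|N IH]; first by rewrite big_ord0 subrr.
by rewrite big_ord_recr /= IH addrC addrA subrK.
Qed.

Lemma sum_if_eq N (c : nat) (f : nat -> V) :
  \sum_(j < N) (if (j : nat) == c then f j else 0) = if (c < N)%N then f c else 0.
Proof.
elim: N => [|N IH]; first by rewrite big_ord0.
rewrite big_ord_recr /= IH.
case: (ltngtP c N) => [lt|gt|->].
- by rewrite ltnS (ltnW lt) addr0.
- by rewrite ltnS leqNgt gt addr0.
- by rewrite ltnSn add0r.
Qed.

Lemma sum_if_eqS N (i : nat) (f : nat -> V) :
  \sum_(j < N) (if i == (j : nat).+1 then f j else 0) =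
  if (0 < i)%N && (i.-1 < N)%N then f i.-1 else 0.
Proof.
case: i => [|i] /=; first by rewrite big1.
rewrite -sum_if_eq; apply: eq_bigr => j _; by rewrite eqSS eq_sym.
Qed.

Lemma dsum_if N (g : nat -> nat -> V) :
  \sum_(i < N) \sum_(j < N) (if (j : nat) == (i : nat).+1 then g (i : nat) (j : nat) else 0) =
  \sum_(k < N.-1) g (k : nat) (k : nat).+1.
Proof.
case: N => [|N]; first by rewrite !big_ord0.
rewrite big_ord_recr /= sum_if_eq ltnn addr0.
apply: eq_bigr => i _; rewrite (sum_if_eq _ _ (fun j => g i j)) /=.
by rewrite ltnS ltn_ord.
Qed.

Lemma dsum_ifS N (g : nat -> nat -> V) :
  \sum_(i < N) \sum_(j < N) (if (i : nat) == (j : nat).+1 then g (i : nat) (j : nat) else 0) =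
  \sum_(k < N.-1) g (k : nat).+1 (k : nat).
Proof.
case: N => [|N]; first by rewrite !big_ord0.
have h k : \sum_(j < N.+1) (if k == (j : nat).+1 then g k j else 0) =
    if (0 < k)%N && (k.-1 < N.+1)%N then g k k.-1 else 0 by exact: sum_if_eqS.
rewrite big_ord_recl; transitivity (0 + \sum_(k < N) g (k : nat).+1 (k : nat)).
  congr (_ + _); first exact: (h 0%N).
  apply: eq_bigr => i _; apply: (etrans (h _)).
  by rewrite /= /bump /= add1n add0n ltnS (ltnW (ltn_ord i)).
by rewrite add0r.
Qed.

End Sums.

Section Sums2.
Variable R : realType.
Lemma sum2_le N (f : 'I_N -> R) i1 i2 : i1 != i2 -> (forall i, 0 <= f i) ->
  f i1 + f i2 <= \sum_i f i.
Proof.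
move=> ne f0; rewrite (bigD1 i1) //= lerD2l (bigD1 i2) /=; last by rewrite eq_sym.
rewrite lerDl; apply: sumr_ge0 => i _; exact: f0.
Qed.
End Sums2.


Section Chain.
Variable R : realType.
Variable m : nat.
Variable w : nat -> R.
Hypothesis hw : forall k, (k < m)%N -> 0 < w k.

Local Notation n := m.+1.
Definition Kn (cn : nat -> R[i]) (i j : nat) : R[i] :=
  (if j == i.+1 then cn i else 0) + (if i == j.+1 then - cn j else 0).

Definition Kmx (a : 'I_n -> R[i]) := commutator (cplx_mx (chainD n w)) (piDiag a).

Lemma Kmx_entry (a : 'I_n -> R[i]) i j :
  Kmx a i j = ((chainD n w) i j)%:C%C * (a j - a i).
Proof.
rewrite /Kmx /commutator /piDiag mul_mx_diag mul_diag_mx !mxE mulrBr; congr (_ - _); exact: mulrC.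
Qed.

Lemma chainD_entry (i j : 'I_n) : chainD n w i j =
  if (j : nat) == (i : nat).+1 then (w i)^-1 else if (i : nat) == (j : nat).+1 then (w j)^-1 else 0.
Proof. by rewrite mxE. Qed.

Definition an (a : 'I_n -> R[i]) (k : nat) := a (inord k).
Definition cn (a : 'I_n -> R[i]) (k : nat) := (an a k.+1 - an a k) * ((w k)^-1)%:C%C.

Lemma Kmx_up (a : 'I_n -> R[i]) (i j : 'I_n) : Kmx a i j = Kn (cn a) i j.
Proof.
rewrite Kmx_entry chainD_entry /Kn /cn.
have ea (x : 'I_n) : a x = an a x by rewrite /an inord_val.
rewrite (ea i) (ea j).
have [ej|nej] := eqVneq (j : nat) (i : nat).+1.
  by rewrite ej (ltn_eqF (ltnW (ltnSn (i : nat).+1))) addr0 mulrC.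
have [ei|nei] := eqVneq (i : nat) (j : nat).+1.
  by rewrite ei add0r mulrC -mulNr opprB.
by rewrite rmorph0 mul0r addr0.
Qed.

Lemma Kn_up (c : nat -> R[i]) k : Kn c k k.+1 = c k.
Proof. by rewrite /Kn eqxx (ltn_eqF (ltnW (ltnSn k.+1))) addr0. Qed.

Lemma Kn_down (c : nat -> R[i]) k : Kn c k.+2 k.+1 = - c k.+1.
Proof. by rewrite /Kn eqxx (ltn_eqF (ltnW (ltnSn k.+2))) add0r. Qed.

Lemma vnorm_delta (j : 'I_n) : vnorm (delta_mx j 0 : 'cV[R[i]]_n) = 1.
Proof.
rewrite /vnorm (bigD1 j) //= big1 => [|k nk]; last by rewrite mxE (negbTE nk) cmod0 expr0n.
by rewrite mxE !eqxx cmod1 expr1n addr0 sqrtr1.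
Qed.

Lemma sq_le1 (x : R) : 0 <= x -> x <= 1 -> x ^+ 2 <= 1.
Proof. by move=> x0 x1; rewrite expr2; apply: mulr_ile1. Qed.

Lemma col_bound a (j : 'I_n) : opnorm (Kmx a) <= 1 ->
  \sum_i cmod (Kmx a i j) ^+ 2 <= 1.
Proof.
move=> hK.
have hv : vnorm (delta_mx j 0 : 'cV[R[i]]_n) <= 1 by rewrite vnorm_delta.
have h2 := le_trans (opnorm_ub (Kmx a) hv) hK.
have e i : (Kmx a *m (delta_mx j 0 : 'cV[R[i]]_n)) i 0 = Kmx a i j.
  rewrite mxE (bigD1 j) //= big1 => [|k nk]; first by rewrite [delta_mx j 0 j 0]mxE !eqxx mulr1 addr0.
  by rewrite [delta_mx j 0 k 0]mxE (negbTE nk) mulr0.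
have -> : \sum_i cmod (Kmx a i j) ^+ 2 = \sum_i cmod ((Kmx a *m (delta_mx j 0 : 'cV[R[i]]_n)) i 0) ^+ 2.
  by apply: eq_bigr => i _; rewrite e.
rewrite -vnorm_sq; exact: sq_le1 (vnorm_ge0 _) h2.
Qed.

Lemma pair_bound a : opnorm (Kmx a) <= 1 -> forall k, (k.+1 < m)%N ->
  cmod (cn a k) ^+ 2 + cmod (cn a k.+1) ^+ 2 <= 1.
Proof.
move=> hK k hk.
have h3 := col_bound (inord k.+1) hK.
apply: le_trans h3.
have hk0 : (k < n)%N by apply: (ltn_trans (ltnSn k)); apply: (ltn_trans hk).
have hk1 : (k.+1 < n)%N by apply: (ltn_trans hk).
have hk2 : (k.+2 < n)%N by [].
have := @sum2_le R n (fun i => cmod (Kmx a i (inord k.+1)) ^+ 2) (inord k) (inord k.+2).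
rewrite !Kmx_up !inordK // Kn_up Kn_down cmodN; apply.
  by apply/eqP => /(congr1 val) /=; rewrite !inordK // => /eqP; rewrite (ltn_eqF (ltnW (ltnSn k.+1))).
by move=> i; exact: sqr_ge0.
Qed.

Definition sc : R := (Num.sqrt (n%:R))^-1.

Lemma sc_gt0 : 0 < sc.
Proof. by rewrite /sc invr_gt0 sqrtr_gt0 ltr0n. Qed.

Lemma sc2 : sc ^+ 2 = (n%:R)^-1.
Proof. by rewrite /sc exprVn sqr_sqrtr // ler0n. Qed.

Lemma inv_n : (n%:R : R)^-1 *+ n = 1.
Proof. by rewrite -[LHS]mulr_natr mulVf // pnatr_eq0. Qed.

Definition Fph (c : R[i]) : R[i] := if c == 0 then 1 else `|c| / c.

Lemma cmod_Fph c : cmod (Fph c) = 1.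
Proof.
rewrite /Fph; case: eqP => [_|/eqP c0]; first exact: cmod1.
rewrite cmodM cmodV cmodE cmodR ger0_norm ?cmod_ge0 // divff //.
by apply/eqP => h; move/eqP: c0; apply; apply/normr0_eq0; rewrite cmodE h.
Qed.

Lemma Fph_mul c : c * Fph c = (cmod c)%:C%C.
Proof.
rewrite /Fph; case: eqP => [->|/eqP c0]; first by rewrite mul0r cmod0.
by rewrite mulrC divfK // cmodE.
Qed.

Fixpoint xv (c : nat -> R[i]) (k : nat) : R[i] * R[i] :=
  match k with
  | 0 => (sc%:C%C, sc%:C%C)
  | k'.+1 => let p := xv c k' in
      (- ((sc ^+ 2)%:C%C * Fph (c k')) / p.2, (sc ^+ 2)%:C%C * Fph (c k') / p.1)
  end.

Lemma xv_norm c k : cmod (xv c k).1 = sc /\ cmod (xv c k).2 = sc.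
Proof.
have s0 := sc_gt0.
elim: k => [|k [h1 h2]] /=; first by rewrite cmodR ger0_norm // ltW.
rewrite !(cmodM, cmodN, cmodV) cmod_Fph cmodR ger0_norm ?sqr_ge0 // h1 h2 mulr1.
by rewrite expr2 mulfK ?lt0r_neq0.
Qed.

Lemma xv_neq0 c k : (xv c k).1 != 0 /\ (xv c k).2 != 0.
Proof.
have [h1 h2] := xv_norm c k; have s0 := sc_gt0.
by split; apply/eqP => e; [move: h1|move: h2]; rewrite e cmod0 => h; move: s0; rewrite -h ltxx.
Qed.

Lemma sum_bound a : opnorm (Kmx a) <= 1 -> \sum_(k < m) cmod (cn a k) <= n%:R / 2.
Proof.
move=> hK.
set c := cn a.
pose X k := (xv c k).1.
pose Y k := (xv c k).2.
pose V : 'cV[R[i]]_n := \col_(i < n) Y i.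
have n0 : (n%:R : R) != 0 by rewrite pnatr_eq0.
have hV : vnorm V <= 1.
  rewrite /vnorm (eq_bigr (fun _ => sc ^+ 2)); last first.
    by move=> i _; rewrite mxE /Y (proj2 (xv_norm _ _)).
  by rewrite sumr_const card_ord sc2 inv_n sqrtr1.
have hKV : \sum_i cmod ((Kmx a *m V) i 0) ^+ 2 <= 1.
  by rewrite -vnorm_sq; exact: sq_le1 (vnorm_ge0 _) (le_trans (opnorm_ub _ hV) hK).
pose S := \sum_(i < n) X i * (Kmx a *m V) i 0.
have hS1 : cmod S <= 1.
  apply: le_trans (cmod_sum _) _.
  apply: le_trans (_ : \sum_(i < n) (cmod (X i) ^+ 2 + cmod ((Kmx a *m V) i 0) ^+ 2) / 2 <= _).
    apply: ler_sum => i _; rewrite cmodM.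
    have := amgm (cmod (X i)) (cmod ((Kmx a *m V) i 0)) ltr01 ltr01.
    by rewrite divr1 !mulr1.
  rewrite -mulr_suml big_split /= (eq_bigr (fun _ => sc ^+ 2)); last first.
    by move=> i _; rewrite /X (proj1 (xv_norm _ _)).
  rewrite sumr_const card_ord sc2 inv_n.
  rewrite ler_pdivrMr // mul1r; lra.
have hS2 : S = (2 * sc ^+ 2 * \sum_(k < m) cmod (c k))%:C%C.
  pose g1 (i j : nat) := X i * (c i * Y j).
  pose g2 (i j : nat) := X i * (- c j * Y j).
  transitivity (\sum_(i < n) \sum_(j < n)
     ((if (j : nat) == (i : nat).+1 then g1 i j else 0) +
      (if (i : nat) == (j : nat).+1 then g2 i j else 0))).
    apply: eq_bigr => i _; rewrite mxE mulr_sumr; apply: eq_bigr => j _.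
    rewrite Kmx_up mxE /Kn /g1 /g2 mulrDl mulrDr; congr (_ + _);
      by case: ifP => _; rewrite ?mul0r ?mulr0.
  transitivity (\sum_(i < n) \sum_(j < n) (if (j : nat) == (i : nat).+1 then g1 i j else 0) +
                \sum_(i < n) \sum_(j < n) (if (i : nat) == (j : nat).+1 then g2 i j else 0)).
    by rewrite -big_split /=; apply: eq_bigr => i _; rewrite -big_split.
  rewrite dsum_if dsum_ifS /= -big_split /= mulr_sumr rmorph_sum.
  apply: eq_bigr => k _; rewrite /g1 /g2 /Y /X /=.
  have [hx hy] := xv_neq0 c k.
  have e1 : (xv c k).1 * (c k * ((sc ^+ 2)%:C%C * Fph (c k) / (xv c k).1)) =
            (sc ^+ 2)%:C%C * (c k * Fph (c k)) by field.
  have e2 : - ((sc ^+ 2)%:C%C * Fph (c k)) / (xv c k).2 * (- c k * (xv c k).2) =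
            (sc ^+ 2)%:C%C * (c k * Fph (c k)) by field.
  rewrite e1 e2 Fph_mul -rmorphM -rmorphD; congr (_%:C%C); ring.
have : cmod S = 2 * n%:R^-1 * \sum_(k < m) cmod (c k).
  rewrite hS2 cmodR ger0_norm sc2 //; apply: mulr_ge0.
    by apply: mulr_ge0 => //; rewrite invr_ge0 ler0n.
  by apply: sumr_ge0 => k _; exact: cmod_ge0.
move=> hS3; rewrite hS3 in hS1.
have -> : \sum_(k < m) cmod (c k) = n%:R / 2 * (2 * n%:R^-1 * \sum_(k < m) cmod (c k)).
  by field.
rewrite -[X in _ <= X]mulr1; apply: ler_wpM2l => //.
Qed.

Lemma tele_bound a : cmod (a ord0 - a ord_max) <= \sum_(k < m) w k * cmod (cn a k).
Proof.
have e0 : a ord0 = an a 0 by rewrite /an; congr a; apply: val_inj; rewrite /= inordK.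
have em : a ord_max = an a m by rewrite /an; congr a; apply: val_inj; rewrite /= inordK.
rewrite e0 em cmodB -tele.
apply: le_trans (cmod_sum _) _; apply: ler_sum => k _.
rewrite /cn cmodM cmodR ger0_norm; last by rewrite invr_ge0 ltW // hw.
by rewrite mulrCA mulfV ?mulr1 // lt0r_neq0 // hw.
Qed.

Definition betan (b : 'I_m -> R) (k : nat) : R :=
  if @insub nat (fun x => (x < m)%N) 'I_m k is Some k' then `|b k'| else 0.

Lemma betan_ge0 b k : 0 <= betan b k.
Proof. by rewrite /betan; case: insubP. Qed.

Lemma betan_ord b (k : 'I_m) : betan b k = `|b k|.
Proof. by rewrite /betan valK. Qed.

Lemma betan_out b k : (m <= k)%N -> betan b k = 0.
Proof. by move=> h; rewrite /betan insubN // -leqNgt. Qed.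

Definition alow (b : 'I_m -> R) (j : 'I_n) : R[i] :=
  (\sum_(k < j) w k * betan b k)%:C%C.

Definition Bn (b : 'I_m -> R) (i j : nat) : R :=
  if j == i.+1 then betan b i else if i == j.+1 then betan b j else 0.

Lemma Kmx_low b (i j : 'I_n) : cmod (Kmx (alow b) i j) <= Bn b i j.
Proof.
rewrite Kmx_entry chainD_entry /Bn /alow.
have [ej|nej] := eqVneq (j : nat) (i : nat).+1.
  have hi : (i < m)%N by rewrite -ltnS -ej.
  rewrite ej big_ord_recr /= -rmorphB addrAC subrr add0r -rmorphM cmodR.
  by rewrite mulrA mulVf ?mul1r ?ger0_norm ?betan_ge0 // lt0r_neq0 // hw.
have [ei|nei] := eqVneq (i : nat) (j : nat).+1.
  have hj : (j < m)%N by rewrite -ltnS -ei.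
  rewrite ei big_ord_recr /= -rmorphB opprD addrA subrr add0r -rmorphM cmodR.
  by rewrite mulrN normrN mulrA mulVf ?mul1r ?ger0_norm ?betan_ge0 // lt0r_neq0 // hw.
by rewrite rmorph0 mul0r cmod0.
Qed.

Lemma Bn_sym b i j : Bn b i j = Bn b j i.
Proof.
rewrite /Bn; have [->|nej] := eqVneq j i.+1.
  by rewrite (ltn_eqF (ltnW (ltnSn i.+1))).
by case: eqP.
Qed.

Lemma row_sum b (U : nat -> R) (i : nat) :
  \sum_(j < n) Bn b i j * U j =
  (if (i.+1 < n)%N then betan b i * U i.+1 else 0) +
  (if (0 < i)%N && (i.-1 < n)%N then betan b i.-1 * U i.-1 else 0).
Proof.
rewrite -(sum_if_eq _ _ (fun j => betan b i * U j)) -(sum_if_eqS _ _ (fun j => betan b j * U j)).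
rewrite -big_split /=; apply: eq_bigr => j _; rewrite /Bn.
have [->|nej] := eqVneq (j : nat) i.+1.
  by rewrite (ltn_eqF (ltnW (ltnSn i.+1))) addr0.
by case: eqP => _; rewrite ?add0r ?mul0r.
Qed.

Lemma lower_opnorm b (U : nat -> R) :
  (forall k, (k < n)%N -> 0 < U k) ->
  (forall i, (i < n)%N ->
     (if (i.+1 < n)%N then betan b i * U i.+1 else 0) +
     (if (0 < i)%N && (i.-1 < n)%N then betan b i.-1 * U i.-1 else 0) <= U i) ->
  opnorm (Kmx (alow b)) <= 1.
Proof.
move=> U0 hU; apply: opnorm_le1 => v hv; apply: le_trans hv.
apply: (@schur R n (Kmx (alow b)) (fun i j => Bn b i j) (fun i => U i)).
- by move=> i; exact: U0.
- exact: Kmx_low.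
- by move=> i; rewrite row_sum; exact: hU.
- move=> j; rewrite (eq_bigr (fun i : 'I_n => Bn b j i * U i)); last by move=> i _; rewrite Bn_sym.
  by rewrite row_sum; exact: hU.
Qed.

Lemma alow_val b : cmod (alow b ord0 - alow b ord_max) = \sum_(k < m) w k * betan b k.
Proof.
rewrite /alow /= big_ord0 sub0r cmodN cmodR ger0_norm //.
apply: sumr_ge0 => k _; apply: mulr_ge0; [exact: ltW (hw (ltn_ord k)) | exact: betan_ge0].
Qed.

Lemma fobj_le_alow (b : 'I_m -> R) : @fobj R n w b <= \sum_(k < m) w k * betan b k.
Proof.
rewrite /fobj /=; apply: ler_sum => k _; apply: ler_wpM2l; first exact: ltW (hw (ltn_ord k)).
by rewrite betan_ord ler_norm.
Qed.

Lemma ncl_ge (b : 'I_m -> R) (U : nat -> R) :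
  (forall k, (k < n)%N -> 0 < U k) ->
  (forall i, (i < n)%N ->
     (if (i.+1 < n)%N then betan b i * U i.+1 else 0) +
     (if (0 < i)%N && (i.-1 < n)%N then betan b i.-1 * U i.-1 else 0) <= U i) ->
  ((@fobj R n w b)%:E <= nclength n w)%E.
Proof.
move=> U0 hU; rewrite /nclength /dist_mx.
apply: le_trans (_ : _ <= (cmod (alow b ord0 - alow b ord_max))%:E)%E _.
  by rewrite lee_fin alow_val; exact: fobj_le_alow.
apply: ereal_sup_ubound; exists (alow b) => //.
exact: (lower_opnorm U0 hU).
Qed.

Lemma ncl_le (x : R) :
  (forall a, opnorm (Kmx a) <= 1 -> cmod (a ord0 - a ord_max) <= x) ->
  (nclength n w <= x%:E)%E.
Proof.
move=> h; rewrite /nclength /dist_mx; apply: ge_ereal_sup => y [a ha <-].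
by rewrite lee_fin; exact: h.
Qed.
End Chain.

Section Sup.
Variable R : realType.

Lemma sup_attained (E : set R) x : E x -> (forall y, E y -> y <= x) -> sup E = x.
Proof.
move=> Ex ub; apply/le_anti/andP; split.
  by apply: ge_sup; [exists x | exact: ub].
by apply: ub_le_sup => //; exists x.
Qed.

Lemma maxf_le_ereal n (w : nat -> R) (P : ('I_n.-1 -> R) -> Prop) (l : \bar R) :
  P (fun _ => 0) -> (forall b, P b -> ((fobj w b)%:E <= l)%E) -> ((maxf w P)%:E <= l)%E.
Proof.
case: l => [r| |] h0 h.
- rewrite lee_fin; apply: ge_sup; first by exists (@fobj R n w (fun _ => 0)), (fun _ => 0).
  by move=> y [b hb <-]; have := h b hb; rewrite lee_fin.
- exact: leey.
- by have := h _ h0; rewrite leeNy_eq.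
Qed.

Lemma maxf_ge n (w : nat -> R) (P : ('I_n.-1 -> R) -> Prop) b (M : R) :
  (forall b, P b -> fobj w b <= M) -> P b -> fobj w b <= maxf w P.
Proof.
move=> ub Pb; apply: ub_le_sup; last by exists b.
by exists M => y [b' hb' <-]; exact: ub.
Qed.
End Sup.

Section Trig.
Variable R : realType.
Variable m : nat.
Definition th : R := pi / (m.+2)%:R.

Lemma th_gt0 : 0 < th.
Proof. by rewrite /th divr_gt0 ?pi_gt0 ?ltr0n. Qed.

Lemma kth_lt_pi (k : nat) : (k < m.+2)%N -> k%:R * th < pi.
Proof.
move=> hk; rewrite /th mulrA ltr_pdivrMr ?ltr0n //.
have p0 := @pi_gt0 R; have : (k%:R : R) < (m.+2)%:R by rewrite ltr_nat.
move=> h; nra.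
Qed.

Lemma cos_th_gt0 : (0 < m)%N -> 0 < cos th.
Proof.
move=> m0; apply: cos_gt0_pihalf; have t0 := th_gt0; have p0 := @pi_gt0 R.
apply/andP; split; first by apply: lt_trans t0; rewrite oppr_lt0 divr_gt0.
rewrite /th ltr_pdivrMr ?ltr0n //.
have : (2%:R : R) < (m.+2)%:R by rewrite ltr_nat !ltnS.
move=> h; nra.
Qed.

Lemma sin_kth_gt0 (k : nat) : (0 < k)%N -> (k < m.+2)%N -> 0 < sin (k%:R * th).
Proof.
move=> k0 hk; apply: sin_gt0_pi; rewrite kth_lt_pi // andbT.
by rewrite mulr_gt0 ?th_gt0 // ltr0n.
Qed.

Lemma sin_kth_ge0 (k : nat) : (k <= m.+2)%N -> 0 <= sin (k%:R * th).
Proof.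
move=> hk; case: k hk => [|k] hk; first by rewrite mul0r sin0.
rewrite leq_eqVlt in hk; case/orP: hk => [/eqP ->|hk].
  by rewrite /th mulrC divfK ?pnatr_eq0 // sinpi.
exact/ltW/sin_kth_gt0.
Qed.

Lemma sin_id (i : nat) :
  sin (i.+2%:R * th) + sin (i%:R * th) = 2 * cos th * sin (i.+1%:R * th).
Proof.
have e1 : i.+2%:R * th = i.+1%:R * th + th by rewrite -(natr1 (R:=R) i.+1) mulrDl mul1r.
have e2 : i%:R * th = i.+1%:R * th + - th by rewrite -(natr1 (R:=R) i) mulrDl mul1r addrK.
rewrite e1 e2 !sinD sinN cosN; ring.
Qed.
End Trig.

Section Main.
Variable R : realType.
Variable m : nat.
Variable w : nat -> R.
Hypothesis hw : forall k, (k < m)%N -> 0 < w k.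
Hypothesis hm : (1 < m)%N.
Local Notation n := m.+1.

Lemma w_ge0 (k : 'I_m) : 0 <= w k.
Proof. exact: ltW (hw (ltn_ord k)). Qed.

Lemma L2_ub (b : 'I_m -> R) : \sum_(k < m) `|b k| <= n%:R / 2 ->
  @fobj R n w b <= n%:R / 2 * \big[Num.max/0]_(k < m) w k.
Proof.
move=> hb; set M := \big[Num.max/0]_(k < m) w k.
have M0 : 0 <= M.
  by apply: le_trans (w_ge0 (Ordinal (ltnW hm))) _; exact: le_bigmax.
apply: le_trans (_ : \sum_(k < m) M * `|b k| <= _).
  apply: ler_sum => k _; apply: le_trans (_ : w k * `|b k| <= _).
    by apply: ler_wpM2l; [exact: w_ge0 | exact: ler_norm].
  by apply: ler_wpM2r => //; exact: le_bigmax.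
by rewrite -mulr_sumr mulrC; apply: ler_wpM2r.
Qed.

Lemma L2_val : L2 n w = n%:R / 2 * \big[Num.max/0]_(k < m) w k.
Proof.
have [i0 _ e] := @eq_bigmax _ _ _ (0 : R) (Ordinal (ltnW hm)) xpredT (fun k : 'I_m => w k) isT (fun k _ => w_ge0 k).
apply: sup_attained; last by move=> y [b hb <-]; exact: L2_ub.
exists (fun k => if k == i0 then n%:R / 2 else 0).
  rewrite /= (bigD1 i0) //= eqxx big1 ?addr0 => [|k /negbTE ->]; last by rewrite normr0.
  by rewrite ger0_norm // divr_ge0 // ler0n.
rewrite /fobj /= (bigD1 i0) //= eqxx big1 ?addr0 => [|k /negbTE ->]; last by rewrite mulr0.
by rewrite mulrC; congr (_ * _); rewrite e.
Qed.

Lemma R2_val : R2 n w = geolength n w / (2 * cos (pi / n.+1%:R)).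
Proof.
have c0 : 0 <= (2 * cos (th R m))^-1.
  by rewrite invr_ge0 mulr_ge0 // ltW // cos_th_gt0 // ltnW.
apply: sup_attained.
  exists (fun _ => (2 * cos (th R m))^-1).
    by move=> k /=; rewrite ger0_norm.
  by rewrite /fobj /geolength mulr_suml.
move=> y [b hb <-]; rewrite /fobj /geolength mulr_suml; apply: ler_sum => k _.
apply: ler_wpM2l; first exact: w_ge0.
exact: le_trans (ler_norm _) (hb k).
Qed.

Lemma R1_le : ((R1 n w)%:E <= nclength n w)%E.
Proof.
apply: maxf_le_ereal; first by move=> k l _; rewrite normr0 addr0 ler01.
move=> b hb.
have pair k : (k.+1 < m)%N -> betan b k + betan b k.+1 <= 1.
  move=> hk; have hk0 : (k < m)%N := ltnW hk.
  rewrite (betan_ord b (Ordinal hk0)) (betan_ord b (Ordinal hk)).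
  exact: (hb (Ordinal hk0) (Ordinal hk) erefl).
have bnd k : betan b k <= 1.
  case: (ltnP k m) => hk; last by rewrite betan_out.
  case: (ltnP k.+1 m) => hk1.
    by apply: le_trans (pair _ hk1); rewrite lerDl betan_ge0.
  case: k hk hk1 => [|k] hk hk1; first by move: hm; rewrite ltnNge hk1.
  by apply: le_trans (pair _ hk); rewrite lerDr betan_ge0.
apply: (ncl_ge hw (U := fun _ => 1)); first by move=> k _; exact: ltr01.
move=> i hi; rewrite !mulr1.
case: i hi => [|i] hi /=; first by case: ifP => _; rewrite addr0 ?bnd ?ler01.
rewrite (ltnW hi); case: ifP => h; last by rewrite add0r bnd.
by rewrite addrC; exact: pair.
Qed.

Lemma R2_le : ((R2 n w)%:E <= nclength n w)%E.
Proof.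
have cth := cos_th_gt0 R (ltnW hm).
have c0 : 0 <= (2 * cos (th R m))^-1 by rewrite invr_ge0 mulr_ge0 // ltW.
apply: maxf_le_ereal; first by move=> k; rewrite normr0.
move=> b hb.
have bb k : betan b k <= (2 * cos (th R m))^-1.
  case: (ltnP k m) => hk; last by rewrite betan_out.
  by rewrite (betan_ord b (Ordinal hk)); exact: hb.
apply: (ncl_ge hw (U := fun k => sin (k.+1%:R * th R m))).
  by move=> k hk; apply: sin_kth_gt0.
move=> i hi.
set c := (2 * cos (th R m))^-1.
have T1 : (if (i.+1 < n)%N then betan b i * sin (i.+2%:R * th R m) else 0)
     <= c * sin (i.+2%:R * th R m).
  have s0 : 0 <= sin (i.+2%:R * th R m) by apply: sin_kth_ge0.
  by case: ifP => _; [apply: ler_wpM2r | apply: mulr_ge0].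
have T2 : (if (0 < i)%N && (i.-1 < n)%N then betan b i.-1 * sin (i.-1.+1%:R * th R m) else 0)
     <= c * sin (i%:R * th R m).
  case: i hi T1 => [|i] hi _ /=; first by rewrite mul0r sin0 mulr0.
  rewrite (ltnW hi); apply: ler_wpM2r => //; apply: sin_kth_ge0.
  by apply: leq_trans (ltnW hi) _.
apply: le_trans (lerD T1 T2) _.
by rewrite -mulrDr sin_id /c mulrA mulVf ?mul1r // mulf_neq0 // lt0r_neq0.
Qed.

Lemma upper : (nclength n w <= (Num.min (L1 n w) (L2 n w))%:E)%E.
Proof.
apply: ncl_le => a ha.
pose bt := fun k : 'I_m => cmod (cn w a k).
apply: le_trans (tele_bound hw a) _.
have e : \sum_(k < m) w k * cmod (cn w a k) = @fobj R n w bt by [].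
rewrite e le_min; apply/andP; split.
  apply: (@maxf_ge R n w _ bt (\sum_(k < m) w k)).
    move=> b hb; rewrite /fobj /=; apply: ler_sum => k _.
    rewrite -[X in _ <= X]mulr1; apply: ler_wpM2l; first exact: w_ge0.
    apply: le_trans (ler_norm _) _.
    have sq1 (x : R) : 0 <= x -> x ^+ 2 <= 1 -> x <= 1 by move=> x0 x1; nra.
    apply: sq1 => //.
    case: (ltnP k.+1 m) => hk1.
      have := hb k (Ordinal hk1) erefl.
      by apply: le_trans; rewrite lerDl sqr_ge0.
    case ek : (k : nat) hk1 => [|k'] hk1.
      by move: hm; rewrite ltnNge hk1.
    have hk' : (k' < m)%N by have := ltn_ord k; rewrite ek => /ltnW.
    have := hb (Ordinal hk') k ek.
    by apply: le_trans; rewrite lerDr sqr_ge0.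
  move=> k l hl; rewrite !ger0_norm ?cmod_ge0 // /bt hl.
  have hk : ((val k).+1 < m)%N by rewrite -hl; exact: ltn_ord l.
  exact: (pair_bound ha hk).
apply: (@maxf_ge R n w _ bt (n%:R / 2 * \big[Num.max/0]_(k < m) w k)).
  by move=> b hb; apply: L2_ub.
under eq_bigr do rewrite ger0_norm ?cmod_ge0 //.
exact: sum_bound.
Qed.
End Main.

Unset Implicit Arguments.
Theorem mainTheorem4 (R : realType) (n : nat) (w : nat -> R)
  (hn : (3 <= n)%N) (hw : forall k, (k < n.-1)%N -> 0 < w k) :
  ((Num.max (R1 n w) (R2 n w))%:E <= nclength n w)%E /\
  (nclength n w <= (Num.min (L1 n w) (L2 n w))%:E)%E /\
  R2 n w = geolength n w / (2 * cos (pi / n.+1%:R)) /\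
  L2 n w = n%:R / 2 * \big[Num.max/0]_(k < n.-1) w k.
Proof.
case: n hn hw => [|m] // hn hw.
have hm : (1 < m)%N by [].
have hw' : forall k, (k < m)%N -> 0 < w k := hw.
split; [|split; [|split]].
- by rewrite maxEle; case: ifP => _; [exact: R2_le | exact: R1_le].
- exact: upper.
- exact: R2_val.
- exact: L2_val.
Qed.
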